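(* Let $v\ge2$ and $k\in\{3,4\}$. Then an optimum $(d,2)$-CDA$((d+1)v^2;k,v)$ exists for every positive integer $d$ with $d+1\le v$.
   Context: Consecutive $t$-way interaction in an $N\times k$ array $A=(a_{ij})$ over a $v$-set $V$: $T=\{(i,x_i),\dots,(i+t-1,x_{i+t-1})\}$, $1\le i\le k-t+1$, $x_r\in V$; $\rho(A,T)=\{r: a_{r,j}=x_j\ \forall (j,x_j)\in T\}$, $\rho(A,\mathcal T)=\bigcup_{T\in\mathcal T}\rho(A,T)$. A $(d,t)$-CDA$(N;k,v)$ is an $N\times k$ array over $V$ in which every $t$ consecutive columns contain every $t$-tuple at least once, and such that for every set $\mathcal T$ of exactly $d$ distinct consecutive $t$-way interactions and every consecutive $t$-way interaction $T$: $\rho(A,T)\subseteq\rho(A,\mathcal T)$ iff $T\in\mathcal T$. It is optimum if $N=(d+1)v^t$. *)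

(* Defs.v *)
From mathcomp Require Import all_boot.
Set Implicit Arguments. Unset Strict Implicit. Unset Printing Implicit Defensive.

(* An N x k array over the v-set 'I_v: entry (row r, column c) is A r c.
   Columns are numbered 0..k-1 (the paper uses 1..k). *)
Definition array (N k v : nat) := 'I_N -> 'I_k -> 'I_v.

(* A consecutive t-way interaction is determined by its starting column i
   (0-based) and its values x_0..x_{t-1}; it is the set
   {(i, x 0), ..., (i+t-1, x (t-1))}.  It is valid iff i + t <= k. *)
Definition interaction (k t v : nat) := ('I_k * {ffun 'I_t -> 'I_v})%type.

Definition valid_inter (k t v : nat) (T : interaction k t v) : bool :=
  T.1 + t <= k.

Definition rho (N k t v : nat) (A : array N k v) (T : interaction k t v)
  : {set 'I_N} :=
  [set r : 'I_N | [forall j : 'I_t, forall c : 'I_k,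
     (nat_of_ord c == T.1 + j) ==> (A r c == T.2 j)]].

Definition rho_set (N k t v : nat) (A : array N k v)
  (TT : {set interaction k t v}) : {set 'I_N} :=
  \bigcup_(T in TT) rho A T.

Definition is_CDA (d t N k v : nat) (A : array N k v) : Prop :=
  (forall T : interaction k t v, valid_inter T -> rho A T != set0) /\
  (forall TT : {set interaction k t v},
     (forall T, T \in TT -> valid_inter T) -> #|TT| = d ->
     forall T : interaction k t v, valid_inter T ->
       (rho A T \subset rho_set A TT <-> T \in TT)).

Definition is_optimum_CDA (d t N k v : nat) (A : array N k v) : Prop :=
  is_CDA d t A /\ N = (d.+1 * v ^ t)%N.

(* Main.v *)
Require Import Defs.
From mathcomp Require Import all_boot.
From mathcomp Require Import all_algebra zify.
Import GRing.Theory.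

Lemma cardI_bigcup_le (T I : finType) (X : {set T}) (P : {pred I}) (F : I -> {set T}) :
  #|X :&: \bigcup_(i in P) F i| <= \sum_(i in P) #|X :&: F i|.
Proof.
elim/big_rec2: _ => [|i n U _ leUn]; first by rewrite setI0 cards0.
rewrite setIUr; apply: (leq_trans (leq_card_setU _ _).1).
by rewrite leq_add2l.
Qed.

Lemma general_CDA d t N k v (A : array N k v) :
  0 < d ->
  (forall T : interaction k t v, valid_inter T -> d < #|rho A T|) ->
  (forall T T' : interaction k t v, valid_inter T -> valid_inter T' -> T != T' ->
      #|rho A T :&: rho A T'| <= 1) ->
  is_CDA d t A.
Proof.
move=> d0 Hcov Hov; split.
  by move=> T vT; rewrite -card_gt0; exact: ltn_trans d0 (Hcov T vT).
move=> TT vTT cTT T vT; split; last first.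
  by move=> TinTT; rewrite /rho_set; exact: (bigcup_sup T TinTT).
move=> sub; apply/negPn/negP => TnTT.
have: #|rho A T| <= d.
  move/setIidPl: sub => <-; rewrite /rho_set.
  apply: (leq_trans (cardI_bigcup_le _ _ (rho A T) TT (rho A))).
  rewrite -cTT -sum1_card; apply: leq_sum => T' T'in.
  apply: Hov => //; first exact: vTT.
  by apply: contraNneq TnTT => ->.
by rewrite leqNgt (Hcov T vT).
Qed.

Lemma rhoP N k v (G : 'I_N -> nat -> 'I_v) (T : interaction k 2 v) r :
  valid_inter T ->
  reflect (G r T.1 = T.2 ord0 /\ G r T.1.+1 = T.2 ord_max)
          (r \in rho (fun r (c : 'I_k) => G r c) T).
Proof.
rewrite /valid_inter => vT.
have h0 : T.1 < k by move: vT; set a := nat_of_ord T.1; lia.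
have h1 : T.1.+1 < k by move: vT; set a := nat_of_ord T.1; lia.
rewrite inE; apply: (iffP forallP).
  move=> H; split.
    by have /forallP/(_ (Ordinal h0))/implyP := H ord0; rewrite /= addn0 eqxx => /(_ isT)/eqP.
  by have /forallP/(_ (Ordinal h1))/implyP := H ord_max; rewrite /= addn1 eqxx => /(_ isT)/eqP.
move=> [H0 H1] j; apply/forallP=> c; apply/implyP=> /eqP hc.
rewrite hc; case: j hc => [[|[|//]] hj] hc /=.
  by rewrite addn0 H0; apply/eqP; congr (T.2 _); apply: val_inj.
by rewrite addn1 H1; apply/eqP; congr (T.2 _); apply: val_inj.
Qed.

Definition gfun n d (p : 'I_(d+1) * 'I_n.+1 * 'I_n.+1) (c : nat) : 'I_n.+1 :=
  let: (s, x, y) := p in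
  let s' : 'I_n.+1 := inZp s in
  match c with 0 => x | 1 => y | 2 => (x + s')%R | _ => (y + s')%R end.
Arguments gfun {n d}.

Lemma inZp_inj n d (s1 s2 : 'I_(d+1)) :
  d + 1 <= n.+1 -> (inZp s1 : 'I_n.+1) = inZp s2 -> s1 = s2.
Proof.
move=> hd /(congr1 val) /=.
rewrite !modn_small => [/val_inj //| |]; by apply: leq_trans (ltn_ord _) hd.
Qed.

Lemma determ n d (p1 p2 : 'I_(d+1) * 'I_n.+1 * 'I_n.+1) : d + 1 <= n.+1 ->
  ((gfun p1 0 = gfun p2 0 /\ gfun p1 1 = gfun p2 1 /\ gfun p1 2 = gfun p2 2) \/
   (gfun p1 1 = gfun p2 1 /\ gfun p1 2 = gfun p2 2 /\ gfun p1 3 = gfun p2 3)) ->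
  p1 = p2.
Proof.
move=> hd; case: p1 => [[s1 x1] y1]; case: p2 => [[s2 x2] y2] /=.
case=> [[ex [ey H]] | [ey [H H3]]].
  by subst; move/addrI/(inZp_inj _ _ _ _ hd): H => ->.
subst; move/addrI/(inZp_inj _ _ _ _ hd): H3 => es; subst.
by move/addIr: H => ->.
Qed.

Theorem mainTheorem14 (v k d : nat) :
  2 <= v -> (k = 3 \/ k = 4) -> 0 < d -> d + 1 <= v ->
  exists A : array ((d + 1) * v ^ 2) k v,
    is_optimum_CDA d 2 A.
Proof.
move=> hv hk hd hdv.
case: v hv hdv => [//|n] _ hdv.
have hk4 : k <= 4 by case: hk => ->.
set N := (d + 1) * n.+1 ^ 2.
pose Ty := ('I_(d+1) * 'I_n.+1 * 'I_n.+1)%type.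
have E : N = #|{: Ty}| by rewrite !card_prod !card_ord /N expnS expn1 mulnA.
pose f (r : 'I_N) : Ty := enum_val (cast_ord E r).
pose fi (p : Ty) : 'I_N := cast_ord (esym E) (enum_rank p).
have ffi : cancel fi f by move=> p; rewrite /f /fi cast_ordKV enum_rankK.
have finj : injective f by move=> r1 r2 /enum_val_inj /cast_ord_inj.
pose G (r : 'I_N) (c : nat) := gfun (f r) c.
exists (fun r (c : 'I_k) => G r c); split; last by rewrite /N addn1.
apply: general_CDA => //.
- move=> T vT.
  have hi : nat_of_ord T.1 <= 2 by move: vT; rewrite /valid_inter; set a := nat_of_ord T.1; lia.
  pose a := T.2 ord0; pose b := T.2 ord_max.
  pose h (s : 'I_(d+1)) : 'I_N := fi (match nat_of_ord T.1 with
      | 0 => (s, a, b) | 1 => (s, (b - inZp s)%R, a)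
      | _ => (s, (a - inZp s)%R, (b - inZp s)%R) end).
  have hinj : injective h.
    move=> s1 s2; rewrite /h => /(can_inj ffi).
    by case: (nat_of_ord T.1) => [|[|?]] [].
  have sub : h @: setT \subset rho (fun r (c : 'I_k) => G r c) T.
    apply/subsetP => _ /imsetP [s _ ->]; apply/rhoP => //; rewrite /G /h ffi -/a -/b.
    move: hi; case: (nat_of_ord T.1) => [|[|[|//]]] _ /=; first by [].
      by rewrite GRing.subrK.
    by rewrite !GRing.subrK.
  apply: leq_trans (subset_leq_card sub).
  by rewrite card_imset // cardsT card_ord addn1.
- move=> T T' vT vT' neq.
  rewrite leqNgt; apply/negP => /card_gt1P [r1 [r2 [/setIP [i1 i1'] /setIP [i2 i2'] ne]]].
  case/negP: ne; apply/eqP; apply: finj; apply: (determ _ _ _ _ hdv).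
  move: (i1) => /(rhoP _ _ _ _ _ _ vT) [a1 b1].
  move: (i2) => /(rhoP _ _ _ _ _ _ vT) [a2 b2].
  move: (i1') => /(rhoP _ _ _ _ _ _ vT') [a1' b1'].
  move: (i2') => /(rhoP _ _ _ _ _ _ vT') [a2' b2'].
  have e1 : G r1 T.1 = G r2 T.1 by rewrite a1 a2.
  have e2 : G r1 T.1.+1 = G r2 T.1.+1 by rewrite b1 b2.
  have e3 : G r1 T'.1 = G r2 T'.1 by rewrite a1' a2'.
  have e4 : G r1 T'.1.+1 = G r2 T'.1.+1 by rewrite b1' b2'.
  have hne : nat_of_ord T.1 != nat_of_ord T'.1.
    apply/negP => /eqP /val_inj e; case/negP: neq; apply/eqP.
    case: T T' e a1 b1 a1' b1' {vT vT' i1 i2 i1' i2' e1 e2 e3 e4 a2 b2 a2' b2'}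
      => [i g] [i' g'] /= <- a1 b1 a1' b1'.
    congr (_, _); apply/ffunP => j; case: j => [[|[|//]] hj].
      have -> : Ordinal hj = ord0 by apply: val_inj.
      by rewrite -a1 -a1'.
    have -> : Ordinal hj = ord_max by apply: val_inj.
    by rewrite -b1 -b1'.
  have hi : nat_of_ord T.1 <= 2 by move: vT; rewrite /valid_inter; set a := nat_of_ord T.1; lia.
  have hi' : nat_of_ord T'.1 <= 2 by move: vT'; rewrite /valid_inter; set a := nat_of_ord T'.1; lia.
  move: e1 e2 e3 e4 hne hi hi'; rewrite /G.
  case: (nat_of_ord T.1) => [|[|[|i]]]; case: (nat_of_ord T'.1) => [|[|[|i']]] //= e1 e2 e3 e4 _ _ _;
    first [by left; repeat split; assumption | by right; repeat split; assumption].
Qed.
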